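(* Let $\beta\in\Phi_+$, $i\in I$ and $w\in W^v$ with $w^{-1}(\alpha_i)=\alpha_i$. If $\beta$, $r_i(\beta)$ and $w(\beta)$ are all quantum roots, then $r_iw(\beta)$ is a quantum root, and $r_iw(\beta^\vee)=w(\beta^\vee)+r_i(\beta^\vee)-\beta^\vee$.
   Context: Kac–Moody root datum $(A,X,Y,(\alpha_i)_{i\in I},(\alpha_i^\vee)_{i\in I})$, generalized Cartan matrix $A$ with $\langle\alpha_i^\vee,\alpha_j\rangle=a_{i,j}$, simple reflections $r_i(x)=x-\langle\alpha_i^\vee,x\rangle\alpha_i$, $r_i(y)=y-\langle y,\alpha_i\rangle\alpha_i^\vee$, $W^v=\langle r_i\rangle$, $\Phi=W^v\{\alpha_i\}$, $\Phi_+=\Phi\cap\bigoplus\mathbb Z_{\ge0}\alpha_i$; coroot $\beta^\vee=w(\alpha_i^\vee)$ and $s_\beta=wr_iw^{-1}$ for $\beta=w(\alpha_i)$. $\mathrm{Inv}(w)=\{\alpha\in\Phi_+\mid w\alpha\in\Phi_-\}$; $\beta\in\Phi_+$ is quantum if $\langle\beta^\vee,\gamma\rangle=1$ for all $\gamma\in\mathrm{Inv}(s_\beta)\setminus\{\beta\}$ (in particular quantum roots are positive). *)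

(* Defs.v *)
(* Kac-Moody root datum with X = Y = Z^n (dual free Z-modules
   of rank n, pairing = standard dot product). *)
From HB Require Import structures.
From mathcomp Require Import all_boot all_order all_algebra.
From Stdlib Require Import ClassicalEpsilon.
Set Implicit Arguments. Unset Strict Implicit. Unset Printing Implicit Defensive.
Import Order.TTheory GRing.Theory Num.Theory.
Local Open Scope ring_scope.

Section KM.
Variables (n : nat) (I : finType).
Variables (alpha alphav : I -> 'rV[int]_n).

Definition pairing (y x : 'rV[int]_n) : int := \sum_(k < n) y ord0 k * x ord0 k.

Definition rX (i : I) (x : 'rV[int]_n) : 'rV[int]_n :=
  x - pairing (alphav i) x *: alpha i.
Definition rY (i : I) (y : 'rV[int]_n) : 'rV[int]_n :=
  y - pairing y (alpha i) *: alphav i.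

(* Elements of W^v are represented by words [:: i1; ...; ik] meaning
   r_{i1} ... r_{ik}; the inverse is the reversed word. *)
Definition actX (w : seq I) (x : 'rV[int]_n) : 'rV[int]_n := foldr rX x w.
Definition actY (w : seq I) (y : 'rV[int]_n) : 'rV[int]_n := foldr rY y w.

Definition is_root (x : 'rV[int]_n) : Prop := exists (w : seq I) (i : I), actX w (alpha i) = x.
Definition in_pos_cone (x : 'rV[int]_n) : Prop :=
  exists c : I -> nat, x = \sum_(i : I) (c i)%:Z *: alpha i.
Definition pos_root (x : 'rV[int]_n) : Prop := is_root x /\ in_pos_cone x.
Definition neg_root (x : 'rV[int]_n) : Prop := is_root x /\ in_pos_cone (- x).

Definition Inv (w : seq I) (g : 'rV[int]_n) : Prop := pos_root g /\ neg_root (actX w g).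

Definition presentation (beta : 'rV[int]_n) : option (seq I * I) :=
  match excluded_middle_informative
          (exists p : seq I * I, actX p.1 (alpha p.2) = beta) with
  | left h => Some (proj1_sig (constructive_indefinite_description _ h))
  | right _ => None
  end.

Definition coroot (beta : 'rV[int]_n) : 'rV[int]_n :=
  match presentation beta with
  | Some p => actY p.1 (alphav p.2)
  | None => 0
  end.

Definition refl_word (beta : 'rV[int]_n) : seq I :=
  match presentation beta with
  | Some p => p.1 ++ p.2 :: rev p.1
  | None => [::]
  end.

Definition quantum (beta : 'rV[int]_n) : Prop :=
  pos_root beta /\
  forall g, Inv (refl_word beta) g -> g <> beta -> pairing (coroot beta) g = 1.

End KM.

Definition gen_cartan (I : finType) (A : I -> I -> int) : Prop :=
  [/\ forall i, A i i = 2,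
      forall i j, i != j -> A i j <= 0
    & forall i j, A i j = 0 <-> A j i = 0].

Definition free_family (n : nat) (I : finType) (v : I -> 'rV[int]_n) : Prop :=
  forall c : I -> int, \sum_(i : I) c i *: v i = 0 -> forall i, c i = 0.

Definition KM_root_datum (n : nat) (I : finType) (A : I -> I -> int)
    (alpha alphav : I -> 'rV[int]_n) : Prop :=
  [/\ gen_cartan A,
      forall i j, pairing (alphav i) (alpha j) = A i j,
      free_family alpha
    & free_family alphav].

(* Main.v *)
Require Import Defs.
From mathcomp Require Import all_boot all_order all_algebra.
From mathcomp Require Import zify ring lra.
From Stdlib Require Import ClassicalEpsilon.
Set Implicit Arguments. Unset Strict Implicit. Unset Printing Implicit Defensive.
Import Order.TTheory GRing.Theory Num.Theory.
Local Open Scope ring_scope.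

Section Basic.
Variables (n : nat) (I : finType) (A : I -> I -> int) (alpha alphav : I -> 'rV[int]_n).
Hypothesis hKM : KM_root_datum A alpha alphav.

Local Notation pairing := (@pairing n).
Local Notation rX := (rX alpha alphav).
Local Notation rY := (rY alpha alphav).
Local Notation actX := (actX alpha alphav).
Local Notation actY := (actY alpha alphav).

Lemma pairingDl y1 y2 x : pairing (y1 + y2) x = pairing y1 x + pairing y2 x.
Proof. by rewrite /pairing -big_split; apply: eq_bigr => k _; rewrite mxE mulrDl. Qed.
Lemma pairingDr y x1 x2 : pairing y (x1 + x2) = pairing y x1 + pairing y x2.
Proof. by rewrite /pairing -big_split; apply: eq_bigr => k _; rewrite mxE mulrDr. Qed.
Lemma pairingZl a y x : pairing (a *: y) x = a * pairing y x.
Proof. by rewrite /pairing mulr_sumr; apply: eq_bigr => k _; rewrite mxE mulrA. Qed.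
Lemma pairingZr a y x : pairing y (a *: x) = a * pairing y x.
Proof. by rewrite /pairing mulr_sumr; apply: eq_bigr => k _; rewrite mxE mulrCA. Qed.
Lemma pairingNl y x : pairing (- y) x = - pairing y x.
Proof. by rewrite -scaleN1r pairingZl mulN1r. Qed.
Lemma pairingNr y x : pairing y (- x) = - pairing y x.
Proof. by rewrite -scaleN1r pairingZr mulN1r. Qed.
Lemma pairingBl y1 y2 x : pairing (y1 - y2) x = pairing y1 x - pairing y2 x.
Proof. by rewrite pairingDl pairingNl. Qed.
Lemma pairingBr y x1 x2 : pairing y (x1 - x2) = pairing y x1 - pairing y x2.
Proof. by rewrite pairingDr pairingNr. Qed.
Lemma pairing0r y : pairing y 0 = 0.
Proof. by rewrite -(scale0r (0 : 'rV[int]_n)) pairingZr mul0r. Qed.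
Lemma pairing0l x : pairing 0 x = 0.
Proof. by rewrite -(scale0r (0 : 'rV[int]_n)) pairingZl mul0r. Qed.

Lemma A_pair i j : pairing (alphav i) (alpha j) = A i j.
Proof. by case: hKM. Qed.
Lemma A_ii i : A i i = 2.
Proof. by case: hKM => [[]]. Qed.
Lemma pair_ii i : pairing (alphav i) (alpha i) = 2.
Proof. by rewrite A_pair A_ii. Qed.

Lemma rXD i x y : rX i (x + y) = rX i x + rX i y.
Proof. by rewrite /Defs.rX pairingDr scalerDl opprD addrACA. Qed.
Lemma rXZ i a x : rX i (a *: x) = a *: rX i x.
Proof. by rewrite /Defs.rX pairingZr scalerBr scalerA. Qed.
Lemma rXN i x : rX i (- x) = - rX i x.
Proof. by rewrite -scaleN1r rXZ scaleN1r. Qed.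
Lemma rX0 i : rX i 0 = 0.
Proof. by rewrite /Defs.rX pairing0r scale0r subr0. Qed.
Lemma rXK i x : rX i (rX i x) = x.
Proof.
rewrite /Defs.rX pairingBr pairingZr pair_ii.
have -> : pairing (alphav i) x - pairing (alphav i) x * 2 = - pairing (alphav i) x by ring.
by rewrite scaleNr opprK subrK.
Qed.
Lemma rX_alpha i : rX i (alpha i) = - alpha i.
Proof. by rewrite /Defs.rX pair_ii scaler_nat mulr2n opprD addNKr. Qed.

Lemma rYK i y : rY i (rY i y) = y.
Proof.
rewrite /Defs.rY pairingBl pairingZl pair_ii.
have -> : pairing y (alpha i) - pairing y (alpha i) * 2 = - pairing y (alpha i) by ring.
by rewrite scaleNr opprK subrK.
Qed.
Lemma rY_adj i y x : pairing (rY i y) x = pairing y (rX i x).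
Proof. by rewrite /Defs.rY /Defs.rX pairingBl pairingBr pairingZl pairingZr mulrC. Qed.

Lemma actX_cat u v x : actX (u ++ v) x = actX u (actX v x).
Proof. by rewrite /Defs.actX foldr_cat. Qed.
Lemma actX_rcons u i x : actX (rcons u i) x = actX u (rX i x).
Proof. by rewrite -cats1 actX_cat. Qed.
Lemma actX_cons u i x : actX (i :: u) x = rX i (actX u x).
Proof. by []. Qed.
Lemma actY_cat u v y : actY (u ++ v) y = actY u (actY v y).
Proof. by rewrite /Defs.actY foldr_cat. Qed.
Lemma actY_rcons u i y : actY (rcons u i) y = actY u (rY i y).
Proof. by rewrite -cats1 actY_cat. Qed.

Lemma actX_revK u x : actX (rev u) (actX u x) = x.
Proof.
elim: u x => [//|i u IH] x; rewrite rev_cons actX_rcons actX_cons rXK; exact: IH.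
Qed.
Lemma actX_K u x : actX u (actX (rev u) x) = x.
Proof. by rewrite -{1}(revK u) actX_revK. Qed.
Lemma actY_revK u y : actY (rev u) (actY u y) = y.
Proof.
elim: u y => [//|i u IH] y; rewrite rev_cons actY_rcons /= rYK; exact: IH.
Qed.
Lemma actY_K u y : actY u (actY (rev u) y) = y.
Proof. by rewrite -{1}(revK u) actY_revK. Qed.
Lemma actX_inj u x y : actX u x = actX u y -> x = y.
Proof. by move=> h; rewrite -(actX_revK u x) h actX_revK. Qed.

Lemma actXD u x y : actX u (x + y) = actX u x + actX u y.
Proof. by elim: u => [//|i u IH]; rewrite !actX_cons IH rXD. Qed.
Lemma actXZ u a x : actX u (a *: x) = a *: actX u x.
Proof. by elim: u => [//|i u IH]; rewrite !actX_cons IH rXZ. Qed.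
Lemma actXN u x : actX u (- x) = - actX u x.
Proof. by rewrite -scaleN1r actXZ scaleN1r. Qed.
Lemma actXB u x y : actX u (x - y) = actX u x - actX u y.
Proof. by rewrite actXD actXN. Qed.
Lemma actX0 u : actX u 0 = 0.
Proof. by elim: u => [//|i u IH]; rewrite !actX_cons IH rX0. Qed.

Lemma actY_adj u y x : pairing (actY u y) x = pairing y (actX (rev u) x).
Proof.
elim: u y x => [//|i u IH] y x.
by rewrite /= rY_adj IH rev_cons actX_rcons.
Qed.


Definition comb (c : I -> int) : 'rV[int]_n := \sum_i c i *: alpha i.

Lemma combB c d : comb c - comb d = comb (fun i => c i - d i).
Proof. by rewrite /comb -sumrB; apply: eq_bigr => i _; rewrite scalerBl. Qed.
Lemma combD c d : comb c + comb d = comb (fun i => c i + d i).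
Proof. by rewrite /comb -big_split; apply: eq_bigr => i _; rewrite scalerDl. Qed.
Lemma combN c : - comb c = comb (fun i => - c i).
Proof. by rewrite /comb -sumrN; apply: eq_bigr => i _; rewrite scaleNr. Qed.
Lemma combZ a c : a *: comb c = comb (fun i => a * c i).
Proof. by rewrite /comb scaler_sumr; apply: eq_bigr => i _; rewrite scalerA. Qed.

Lemma comb_inj c d : comb c = comb d -> forall i, c i = d i.
Proof.
move=> h i; case: hKM => _ _ fr _.
apply/eqP; rewrite -subr_eq0; apply/eqP; apply: (fr (fun i => c i - d i)).
by rewrite -/(comb _) -combB h subrr.
Qed.

Definition ind (k : I) : I -> int := fun i => (i == k)%:R.
Lemma comb_ind k : comb (ind k) = alpha k.
Proof.
rewrite /comb (bigD1 k) //= /ind eqxx scale1r big1 ?addr0 //.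
by move=> j /negbTE ->; rewrite scale0r.
Qed.
Lemma comb0 : comb (fun _ => 0) = 0.
Proof. by rewrite /comb big1 // => i _; rewrite scale0r. Qed.

Lemma alpha_neq0 k : alpha k != 0.
Proof.
apply/eqP => h; have := comb_inj (c := ind k) (d := fun _ => 0).
by rewrite comb_ind comb0 h => /(_ erefl k); rewrite /ind eqxx.
Qed.

Definition nonneg (x : 'rV[int]_n) := exists c, (forall i, 0 <= c i) /\ x = comb c.
Definition nonpos (x : 'rV[int]_n) := nonneg (- x).

Lemma nonneg_alpha k : nonneg (alpha k).
Proof. by exists (ind k); split; [move=> i; rewrite /ind ler0n | rewrite comb_ind]. Qed.
Lemma nonnegD x y : nonneg x -> nonneg y -> nonneg (x + y).
Proof.
move=> [c [hc ->]] [d [hd ->]]; exists (fun i => c i + d i); split; last by rewrite combD.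
by move=> i; apply: addr_ge0.
Qed.
Lemma nonnegZ a x : 0 <= a -> nonneg x -> nonneg (a *: x).
Proof.
move=> ha [c [hc ->]]; exists (fun i => a * c i); split; last by rewrite combZ.
by move=> i; apply: mulr_ge0.
Qed.
Lemma nonneg_nonpos x : nonneg x -> nonpos x -> x = 0.
Proof.
move=> [c [hc ex]] [d [hd ed]].
have h : comb (fun i => c i + d i) = comb (fun _ => 0).
  by rewrite -combD -ex -ed subrr comb0.
have hc0 i : c i = 0.
  have := comb_inj h i; have := hc i; have := hd i; lia.
by rewrite ex /comb big1 // => i _; rewrite hc0 scale0r.
Qed.

Fixpoint alt (s t : I) (k : nat) : seq I :=
  match k with 0 => [::] | k'.+1 => rcons (alt t s k') t end.

Definition inI (s t : I) (y : seq I) := all (fun z => (z == s) || (z == t)) y.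

Lemma inI_sym s t y : inI s t y = inI t s y.
Proof. by apply: eq_all => z; rewrite orbC. Qed.
Lemma inI_rcons s t y z : inI s t (rcons y z) = inI s t y && ((z == s) || (z == t)).
Proof. by rewrite /inI all_rcons andbC. Qed.
Lemma inI_cat s t y y' : inI s t (y ++ y') = inI s t y && inI s t y'.
Proof. by rewrite /inI all_cat. Qed.

Lemma inI_cons s t z y : inI s t (z :: y) = ((z == s) || (z == t)) && inI s t y.
Proof. by []. Qed.
Lemma inI_nil s t : inI s t [::].
Proof. by []. Qed.

Lemma size_alt s t k : size (alt s t k) = k.
Proof. by elim: k s t => [//|k IH] s t; rewrite /= size_rcons IH. Qed.
Lemma inI_alt s t k : inI s t (alt s t k).
Proof.
elim: k s t => [//|k IH] s t; rewrite /= inI_rcons eqxx orbT andbT inI_sym; exact: IH.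
Qed.
Lemma alt_add2 s t k : alt s t (k + 2) = alt s t k ++ [:: s; t].
Proof. by rewrite addn2 /= -!cats1 -catA. Qed.
Lemma alt_period s t k p : alt s t (k + 2 * p) = alt s t k ++ alt s t (2 * p).
Proof.
elim: p => [|p IH]; first by rewrite muln0 addn0 cats0.
by rewrite mulnS (addnC 2) addnA !alt_add2 IH -catA.
Qed.

Lemma rXrX_id i x : actX [:: i; i] x = x.
Proof. by rewrite /= rXK. Qed.

Lemma alt_form s t x : inI s t x ->
  (forall y, inI s t y -> actX y =1 actX x -> (size x <= size y)%N) ->
  (forall y, inI s t y -> actX y =1 actX (rcons x s) -> (size x <= size y)%N) ->
  x = alt s t (size x).
Proof.
elim/last_ind: x s t => [//|x z IH] s t; rewrite inI_rcons => /andP [hx hz] h1 h2.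
have zt : z = t.
  case/orP: hz => /eqP // zs; subst z.
  have hh : (size (rcons x s) <= size x)%N by apply: h2 => // y; rewrite !actX_rcons rXK.
  by rewrite size_rcons ltnn in hh.
subst z; rewrite size_rcons /=; congr rcons; apply: IH.
- by rewrite inI_sym.
- move=> y hy hyx; have := h1 (rcons y t); rewrite !size_rcons ltnS; apply.
    by rewrite inI_rcons eqxx orbT andbT inI_sym.
  by move=> v; rewrite !actX_rcons hyx.
- move=> y hy hyx; have := h1 y; rewrite inI_sym size_rcons => /(_ hy hyx).
  exact: ltnW.
Qed.

Fixpoint cf (a b : int) (k : nat) (p q : int) : int * int :=
  match k with 0 => (p, q)
  | k'.+1 => let r := cf b a k' (- q - p * b) p in (r.2, r.1) end.

Lemma cf_spec s t k p q :
  actX (alt s t k) (p *: alpha s + q *: alpha t) =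
  (cf (A s t) (A t s) k p q).1 *: alpha s + (cf (A s t) (A t s) k p q).2 *: alpha t.
Proof.
elim: k s t p q => [//|k IH] s t p q.
rewrite /= actX_rcons.
have -> : rX t (p *: alpha s + q *: alpha t) = (- q - p * A t s) *: alpha t + p *: alpha s.
  rewrite /Defs.rX pairingDr !pairingZr !A_pair A_ii.
  rewrite -addrA -scalerBl addrC; congr (_ *: _ + _); ring.
by rewrite IH addrC.
Qed.

Fixpoint gf (a b : int) (k : nat) (u v P Q : int) : int * int :=
  match k with 0 => (P, Q)
  | k'.+1 => let r := gf b a k' (- v) (u - a * v) (Q - v) P in (r.2, r.1) end.

Lemma gf_spec s t k x P Q u v :
  u = pairing (alphav s) (x + P *: alpha s + Q *: alpha t) ->
  v = pairing (alphav t) (x + P *: alpha s + Q *: alpha t) ->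
  actX (alt s t k) (x + P *: alpha s + Q *: alpha t) =
  x + (gf (A s t) (A t s) k u v P Q).1 *: alpha s + (gf (A s t) (A t s) k u v P Q).2 *: alpha t.
Proof.
elim: k s t x P Q u v => [//|k IH] s t x P Q u v hu hv.
rewrite /= actX_rcons.
have e : rX t (x + P *: alpha s + Q *: alpha t) = x + (Q - v) *: alpha t + P *: alpha s.
  rewrite /Defs.rX -hv scalerBl -!addrA; congr (_ + _); by rewrite addrC -!addrA.
rewrite e (IH t s x (Q - v) P (- v) (u - A s t * v)); first by rewrite addrAC.
- rewrite -e /Defs.rX pairingBr pairingZr pair_ii -hv.
  lia.
- rewrite -e /Defs.rX pairingBr pairingZr A_pair -hu -hv.
  ring.
Qed.

Lemma cf_inf k : forall a b p q, a <= 0 -> b <= 0 -> 4 <= a * b -> 0 <= p -> 0 <= q ->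
  2 * q <= - b * p -> 0 <= (cf a b k p q).1 /\ 0 <= (cf a b k p q).2.
Proof.
elim: k => [|k IH] a b p q ha hb hab hp hq hinv; first by [].
rewrite /=.
have [h1 h2] : 0 <= (cf b a k (- q - p * b) p).1 /\ 0 <= (cf b a k (- q - p * b) p).2.
  apply: IH => //; first by rewrite mulrC.
  - lia.
  - have e1 : 0 <= (- a) * (- b * p - 2 * q) by apply: mulr_ge0; lia.
    have e2 : 0 <= (a * b - 4) * p by apply: mulr_ge0; lia.
    lia.
by split.
Qed.

Lemma alt_refl s t m :
  actX (alt s t (2 * m)) =1 id -> actX (alt t s (2 * m)) =1 id ->
  forall j, (j <= 2 * m)%N ->
  actX (alt t s j) =1 actX (alt s t (2 * m - j)) /\
  actX (alt s t j) =1 actX (alt t s (2 * m - j)).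
Proof.
move=> b1 b2; elim=> [|j IH] hj.
  by rewrite subn0; split => y /=; [rewrite b1 | rewrite b2].
have [IH1 IH2] := IH (ltnW hj).
have e : (2 * m - j = (2 * m - j.+1).+1)%N by rewrite subnSK.
split => y /=; rewrite actX_rcons.
- rewrite IH2 e /= actX_rcons rXK //.
- rewrite IH1 e /= actX_rcons rXK //.
Qed.

Definition fin_ok (a b : int) (m : nat) := (0 < m)%N /\
  (forall u v, gf a b (2 * m) u v 0 0 = (0, 0)) /\
  (forall u v, gf b a (2 * m) u v 0 0 = (0, 0)) /\
  (forall k, (k < m)%N -> 0 <= (cf a b k 1 0).1 /\ 0 <= (cf a b k 1 0).2).

Lemma cases_ab (a b : int) : a <= 0 -> b <= 0 -> (a = 0 <-> b = 0) ->
  4 <= a * b \/ exists m, fin_ok a b m.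
Proof.
move=> ha hb hab.
have : a = 0 \/ a = -1 \/ a = -2 \/ a = -3 \/ a <= -4 by lia.
have : b = 0 \/ b = -1 \/ b = -2 \/ b = -3 \/ b <= -4 by lia.
move=> hb' ha'; move: hab ha hb.
case: ha' => [->|[->|[->|[->|ha4]]]]; case: hb' => [->|[->|[->|[->|hb4]]]];
  move=> hab ha hb; try (by exfalso; lia); try (by left; nia).
- by right; exists 2%N; split => //; split; [|split];
  [ move=> u v; rewrite (_ : (2 * _ = 4)%N) //; cbn [gf fst snd]; congr pair; ring
  | move=> u v; rewrite (_ : (2 * _ = 4)%N) //; cbn [gf fst snd]; congr pair; ring
  | move=> k hk; do 6?[case: k hk => [|k] hk] => //=].
- by right; exists 3%N; split => //; split; [|split];
  [ move=> u v; rewrite (_ : (2 * _ = 6)%N) //; cbn [gf fst snd]; congr pair; ring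
  | move=> u v; rewrite (_ : (2 * _ = 6)%N) //; cbn [gf fst snd]; congr pair; ring
  | move=> k hk; do 6?[case: k hk => [|k] hk] => //=].
- by right; exists 4%N; split => //; split; [|split];
  [ move=> u v; rewrite (_ : (2 * _ = 8)%N) //; cbn [gf fst snd]; congr pair; ring
  | move=> u v; rewrite (_ : (2 * _ = 8)%N) //; cbn [gf fst snd]; congr pair; ring
  | move=> k hk; do 6?[case: k hk => [|k] hk] => //=].
- by right; exists 6%N; split => //; split; [|split];
  [ move=> u v; rewrite (_ : (2 * _ = 12)%N) //; cbn [gf fst snd]; congr pair; ring
  | move=> u v; rewrite (_ : (2 * _ = 12)%N) //; cbn [gf fst snd]; congr pair; ring
  | move=> k hk; do 6?[case: k hk => [|k] hk] => //=].
- by right; exists 4%N; split => //; split; [|split];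
  [ move=> u v; rewrite (_ : (2 * _ = 8)%N) //; cbn [gf fst snd]; congr pair; ring
  | move=> u v; rewrite (_ : (2 * _ = 8)%N) //; cbn [gf fst snd]; congr pair; ring
  | move=> k hk; do 6?[case: k hk => [|k] hk] => //=].
- by right; exists 6%N; split => //; split; [|split];
  [ move=> u v; rewrite (_ : (2 * _ = 12)%N) //; cbn [gf fst snd]; congr pair; ring
  | move=> u v; rewrite (_ : (2 * _ = 12)%N) //; cbn [gf fst snd]; congr pair; ring
  | move=> k hk; do 6?[case: k hk => [|k] hk] => //=].
Qed.

Lemma dihedral s t x : s != t -> inI s t x ->
  (forall y, inI s t y -> actX y =1 actX x -> (size x <= size y)%N) ->
  (forall y, inI s t y -> actX y =1 actX (rcons x s) -> (size x <= size y)%N) ->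
  exists p q : int, [/\ 0 <= p, 0 <= q & actX x (alpha s) = p *: alpha s + q *: alpha t].
Proof.
move=> hst hx h1 h2.
have ex := alt_form hx h1 h2.
move: h1 h2; rewrite ex size_alt; set k := size x => h1 h2.
have ea : alpha s = 1 *: alpha s + 0 *: alpha t by rewrite scale1r scale0r addr0.
rewrite {1}ea cf_spec.
suff [hp hq] : 0 <= (cf (A s t) (A t s) k 1 0).1 /\ 0 <= (cf (A s t) (A t s) k 1 0).2.
  by eexists; eexists; split; [exact: hp | exact: hq | reflexivity].
have [_ hneg hz] : gen_cartan A by case: hKM.
have ha := hneg _ _ hst.
have hb : A t s <= 0 by apply: hneg; rewrite eq_sym.
case: (cases_ab ha hb (hz s t)) => [h4|[m [hm [g1 [g2 hc]]]]].
  by apply: cf_inf => //; lia.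
apply: hc; rewrite ltnNge; apply/negP => hmk.
have b1 : actX (alt s t (2 * m)) =1 id.
  move=> y; have := @gf_spec s t (2 * m) y 0 0 _ _ (erefl _) (erefl _).
  by rewrite g1 /= !scale0r !addr0.
have b2 : actX (alt t s (2 * m)) =1 id.
  move=> y; have := @gf_spec t s (2 * m) y 0 0 _ _ (erefl _) (erefl _).
  by rewrite g2 /= !scale0r !addr0.
case: (ltnP k (2 * m)) => hk2.
- have [r1 _] := alt_refl b1 b2 hk2.
  have := h2 (alt s t (2 * m - k.+1)) (inI_alt _ _ _).
  rewrite size_alt => hh.
  have : (k <= 2 * m - k.+1)%N by apply: hh => y; rewrite -r1.
  lia.
- have e : alt s t k = alt s t (k - 2 * m) ++ alt s t (2 * m).
    by rewrite -alt_period subnK.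
  have := h1 (alt s t (k - 2 * m)) (inI_alt _ _ _).
  rewrite size_alt => hh.
  have : (k <= k - 2 * m)%N by apply: hh => y; rewrite e actX_cat b1.
  lia.
Qed.

Definition pb (P : Prop) : bool := if excluded_middle_informative P then true else false.
Lemma pbP (P : Prop) : reflect P (pb P).
Proof. by rewrite /pb; case: excluded_middle_informative => h; constructor. Qed.

Definition lenP (w : seq I) (m : nat) : Prop := exists v, size v = m /\ actX v =1 actX w.
Lemma lenP_ex w : exists m, pb (lenP w m).
Proof. by exists (size w); apply/pbP; exists w. Qed.
Definition len w := ex_minn (lenP_ex w).

Lemma len_wit w : exists v, size v = len w /\ actX v =1 actX w.
Proof. by rewrite /len; case: ex_minnP => m /pbP. Qed.
Lemma len_le w v : actX v =1 actX w -> (len w <= size v)%N.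
Proof.
by move=> h; rewrite /len; case: ex_minnP => m _ hmin; apply: hmin; apply/pbP; exists v.
Qed.
Lemma len_ext w w' : actX w =1 actX w' -> len w = len w'.
Proof.
move=> h; apply/eqP; rewrite eqn_leq.
have [v [sv hv]] := len_wit w; have [v' [sv' hv']] := len_wit w'.
rewrite -{1}sv' -{2}sv; apply/andP; split; apply: len_le => y.
- by rewrite hv' h.
- by rewrite hv h.
Qed.

Definition prP (w : seq I) s t N (m : nat) : Prop :=
  exists v x, [/\ inI s t x, actX (v ++ x) =1 actX w, (size v + size x = N)%N & size v = m].

Theorem humphreys N : forall w s, len w = N -> (len w <= len (rcons w s))%N ->
  nonneg (actX w (alpha s)).
Proof.
elim/ltn_ind: N => N IH w s hN hle.
have [w0 [sw0 hw0]] := len_wit w.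
case: (lastP w0) sw0 hw0 => [|w' t] sw0 hw0.
  have e : actX w (alpha s) = alpha s by rewrite -hw0.
  by rewrite e; apply: nonneg_alpha.
rewrite size_rcons hN in sw0.
have hts : s != t.
  apply/eqP => est; subst t; move: hle; rewrite hN.
  have : (len (rcons w s) <= size w')%N.
    by apply: len_le => y; rewrite actX_rcons -hw0 !actX_rcons rXK.
  lia.
have ex : exists m, pb (prP w s t N m).
  exists (size w'); apply/pbP; exists w', [:: t]; split => //.
  - by rewrite inI_cons inI_nil eqxx orbT.
  - by move=> y; rewrite cats1 hw0.
  - by rewrite addn1.
case: (ex_minnP ex) => m0 /pbP [v [x [hx hvx hsz hv]]] hmin.
have hmin' : forall v' x', inI s t x' -> actX (v' ++ x') =1 actX w ->
    (size v' + size x' <= N)%N -> (m0 <= size v')%N.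
  move=> v' x' hx' hvx' hs; apply: hmin; apply/pbP; exists v', x'; split => //.
  apply/eqP; rewrite eqn_leq hs /= -hN -size_cat; exact: len_le.
have hvN : (size v < N)%N.
  have : (m0 <= size w')%N.
    apply: (hmin' w' [:: t]); first by rewrite inI_cons inI_nil eqxx orbT.
      by move=> y; rewrite cats1 hw0.
    by rewrite /= addn1 sw0.
  rewrite -hv; lia.
have hc : forall z, z = s \/ z = t -> (len v <= len (rcons v z))%N.
  move=> z hz; rewrite leqNgt; apply/negP => hlt.
  have [v2 [sv2 hv2]] := len_wit (rcons v z).
  have hlv := len_le (fun y => erefl (actX v y)).
  have : (m0 <= size v2)%N.
    apply: (hmin' v2 (z :: x)).
    - by rewrite inI_cons hx andbT; case: hz => ->; rewrite eqxx ?orbT.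
    - by move=> y; rewrite actX_cat /= hv2 actX_rcons rXK -actX_cat hvx.
    - rewrite /= -hsz addnS -addSn leq_add2r sv2; exact: leq_trans hlt hlv.
  rewrite sv2 -hv; lia.
have hlvN : (len v < N)%N.
  exact: leq_ltn_trans (len_le (fun y => erefl (actX v y))) hvN.
have pos_s := IH _ hlvN v s erefl (hc s (or_introl erefl)).
have pos_t := IH _ hlvN v t erefl (hc t (or_intror erefl)).
have h1 : forall y, inI s t y -> actX y =1 actX x -> (size x <= size y)%N.
  move=> y hy hyx; rewrite leqNgt; apply/negP => hlt.
  have : (N <= size (v ++ y))%N.
    by rewrite -hN; apply: len_le => z; rewrite actX_cat hyx -actX_cat hvx.
  rewrite size_cat; lia.
have h2 : forall y, inI s t y -> actX y =1 actX (rcons x s) -> (size x <= size y)%N.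
  move=> y hy hyx; rewrite leqNgt; apply/negP => hlt.
  have : (len (rcons w s) <= size (v ++ y))%N.
    by apply: len_le => z; rewrite actX_cat hyx actX_rcons -actX_cat hvx actX_rcons.
  rewrite size_cat; lia.
have [p [q [hp hq e]]] := dihedral hts hx h1 h2.
rewrite -hvx actX_cat e actXD !actXZ.
by apply: nonnegD; apply: nonnegZ.
Qed.

Lemma actX_nonneg w s : (len w <= len (rcons w s))%N -> nonneg (actX w (alpha s)).
Proof. exact: (humphreys (N := len w)). Qed.

Lemma actX_nonpos w s : (len (rcons w s) < len w)%N -> nonpos (actX w (alpha s)).
Proof.
move=> h; rewrite /nonpos.
have e : actX (rcons w s) (alpha s) = - actX w (alpha s) by rewrite actX_rcons rX_alpha actXN.
rewrite -e; apply: actX_nonneg.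
rewrite (@len_ext (rcons (rcons w s) s) w); first exact: ltnW.
by move=> y; rewrite !actX_rcons rXK.
Qed.

Lemma dichot w s : nonneg (actX w (alpha s)) \/ nonpos (actX w (alpha s)).
Proof.
case: (leqP (len w) (len (rcons w s))) => h; [left; exact: actX_nonneg | right; exact: actX_nonpos].
Qed.

Lemma root_dichot x : is_root alpha alphav x -> nonneg x \/ nonpos x.
Proof. by move=> [w [i <-]]; apply: dichot. Qed.

Lemma actX_alpha_neq0 u k : actX u (alpha k) != 0.
Proof.
apply/eqP => h; move: (alpha_neq0 k); rewrite -(actX_revK u (alpha k)) h actX0.
by rewrite eqxx.
Qed.

Lemma root_neq0 x : is_root alpha alphav x -> x != 0.
Proof. by move=> [w [i <-]]; apply: actX_alpha_neq0. Qed.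

Lemma factK u : (forall k, nonneg (actX u (alpha k))) -> actX u =1 id.
Proof.
move=> hk.
have [v [sv hv]] := len_wit u.
case: (lastP v) sv hv => [|v' t] sv hv; first by move=> y; rewrite -hv.
rewrite size_rcons in sv.
have hlt : (len (rcons u t) < len u)%N.
  rewrite -sv ltnS; apply: len_le => y.
  by rewrite actX_rcons -hv actX_rcons rXK.
have e := nonneg_nonpos (hk t) (actX_nonpos hlt).
by move: (actX_alpha_neq0 u t); rewrite e eqxx.
Qed.

Lemma pairing_delta (y : 'rV[int]_n) k : pairing y (delta_mx 0 k) = y 0 k.
Proof.
rewrite /Defs.pairing (bigD1 k) //= mxE !eqxx mulr1 big1 ?addr0 //.
by move=> l /negbTE hl; rewrite mxE hl andbF mulr0.
Qed.

Lemma pairing_eq0 (h : 'rV[int]_n) : (forall x, pairing h x = 0) -> h = 0.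
Proof.
move=> H; apply/matrixP => a b; rewrite (ord1 a) mxE -pairing_delta; exact: H.
Qed.

Lemma comb_ind_scale c j : c *: alpha j = comb (fun l => c * ind j l).
Proof. by rewrite -combZ comb_ind. Qed.

Lemma not_nonpos_mixed k j c : k != j -> ~ nonpos (alpha k + c *: alpha j).
Proof.
move=> hkj [d [hd e]].
have e2 : comb d = comb (fun l => - (ind k l + c * ind j l)).
  by rewrite -e -combN -combD -comb_ind_scale comb_ind.
have h2 := comb_inj e2 k; have h1 := hd k.
move: h1; rewrite h2 /ind eqxx (negbTE hkj) /= mulr0 addr0.
by [].
Qed.

Lemma coroot_wd u i j : actX u (alpha i) = alpha j -> actY u (alphav i) = alphav j.
Proof.
move=> huij.
set th := actY u (alphav i).
set h := th - alphav j.
have hz : forall x, actX (j :: (u ++ i :: rev u)) x = x + pairing h x *: alpha j.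
  move=> x; rewrite actX_cons actX_cat actX_cons /Defs.rX actXB actXZ actX_K huij.
  rewrite -actY_adj -/th pairingBr pairingZr pair_ii /h pairingBl.
  rewrite -addrA -scaleNr -scalerBl; congr (_ + _ *: _); ring.
have hzj : pairing h (alpha j) = 0.
  rewrite /h pairingBl pair_ii actY_adj.
  have -> : actX (rev u) (alpha j) = alpha i by rewrite -huij actX_revK.
  by rewrite pair_ii subrr.
have hall : forall k, nonneg (actX (j :: (u ++ i :: rev u)) (alpha k)).
  move=> k; case: (eqVneq k j) => [->|hkj].
    by rewrite hz hzj scale0r addr0; apply: nonneg_alpha.
  case: (dichot (j :: (u ++ i :: rev u)) k) => // hn.
  by exfalso; move: hn; rewrite hz; apply: not_nonpos_mixed.
have hK := factK hall.
have h0 : h = 0.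
  apply: pairing_eq0 => x.
  have e : pairing h x *: alpha j = 0.
    by apply: (@addrI _ x); rewrite addr0 -hz hK.
  have e2 : comb (fun l => pairing h x * ind j l) = comb (fun _ => 0).
    by rewrite -comb_ind_scale e comb0.
  by have := comb_inj e2 j; rewrite /ind eqxx /= mulr1.
by apply/eqP; rewrite -subr_eq0 -/h h0.
Qed.

Local Notation is_root := (is_root alpha alphav).
Local Notation pos_root := (pos_root alpha alphav).
Local Notation neg_root := (neg_root alpha alphav).
Local Notation coroot := (coroot alpha alphav).
Local Notation refl_word := (refl_word alpha alphav).
Local Notation Inv := (Inv alpha alphav).
Local Notation quantum := (quantum alpha alphav).

Lemma cone_nonneg x : in_pos_cone alpha x <-> nonneg x.
Proof.
split.
  by move=> [c ->]; exists (fun i => (c i)%:Z); split.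
move=> [c [hc ->]]; exists (fun i => `|c i|%N); rewrite /comb.
by apply: eq_bigr => i _; rewrite gez0_abs.
Qed.

Lemma pos_rootE x : pos_root x <-> is_root x /\ nonneg x.
Proof. by rewrite /Defs.pos_root cone_nonneg. Qed.
Lemma neg_rootE x : neg_root x <-> is_root x /\ nonpos x.
Proof. by rewrite /Defs.neg_root cone_nonneg. Qed.

Lemma root_alpha i : is_root (alpha i).
Proof. by exists [::], i. Qed.
Lemma root_act u x : is_root x -> is_root (actX u x).
Proof. by move=> [w [i <-]]; exists (u ++ w), i; rewrite actX_cat. Qed.
Lemma root_N x : is_root x -> is_root (- x).
Proof.
by move=> [w [i <-]]; exists (rcons w i), i; rewrite actX_rcons rX_alpha actXN.
Qed.

Lemma pres_some x : is_root x ->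
  exists p, presentation alpha alphav x = Some p /\ actX p.1 (alpha p.2) = x.
Proof.
move=> hx; rewrite /presentation; case: excluded_middle_informative => h.
  eexists; split; first reflexivity.
  exact: (proj2_sig (constructive_indefinite_description _ h)).
by exfalso; apply: h; case: hx => w [i e]; exists (w, i).
Qed.

Lemma coroot_eq u i x : actX u (alpha i) = x -> coroot x = actY u (alphav i).
Proof.
move=> hx.
have [[p1 p2] [hp e]] := pres_some (ex_intro _ u (ex_intro _ i hx)).
rewrite /Defs.coroot hp /=.
have h : actX (rev u ++ p1) (alpha p2) = alpha i by rewrite actX_cat /= e -hx actX_revK.
have := coroot_wd h; rewrite actY_cat => e2.
by rewrite -e2 actY_K.
Qed.

Lemma coroot_act u x : is_root x -> coroot (actX u x) = actY u (coroot x).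
Proof.
move=> [w [i <-]]; rewrite (coroot_eq (erefl _)) -actX_cat (coroot_eq (erefl _)).
by rewrite actY_cat.
Qed.

Lemma refl_act x y : is_root x -> actX (refl_word x) y = y - pairing (coroot x) y *: x.
Proof.
move=> hx; have [[p1 p2] [hp e]] := pres_some hx.
rewrite /Defs.refl_word /Defs.coroot hp /= actX_cat actX_cons /Defs.rX actXB actX_K.
by rewrite actXZ e actY_adj.
Qed.

Lemma coroot_pair x : is_root x -> pairing (coroot x) x = 2.
Proof.
move=> [w [i <-]]; rewrite (coroot_eq (erefl _)) actY_adj actX_revK; exact: pair_ii.
Qed.

Lemma comb_single e i : (forall l, l != i -> e l = 0) -> comb e = e i *: alpha i.
Proof.
move=> h; rewrite /comb (bigD1 i) //= big1 ?addr0 // => l hl; by rewrite h // scale0r.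
Qed.

Lemma coord_pos_nonpos x e l : x = comb e -> 0 < e l -> ~ nonpos x.
Proof.
move=> -> hl [f [hf e2]]; have := comb_inj (etrans (esym e2) (combN e)) l.
have := hf l; lia.
Qed.
Lemma coord_neg_nonneg x e l : x = comb e -> e l < 0 -> ~ nonneg x.
Proof.
move=> -> hl [f [hf e2]]; have := comb_inj e2 l; have := hf l; lia.
Qed.

Lemma root_int x : is_root x -> exists e, x = comb e.
Proof.
move=> /root_dichot [[e [_ ->]]|[e [_ he]]]; first by exists e.
by exists (fun l => - e l); rewrite -combN -he opprK.
Qed.

Lemma root_single x e i : is_root x -> x = comb e -> (forall l, l != i -> e l = 0) ->
  e i = 1 \/ e i = -1.
Proof.
move=> [u [k hx]] hxe hl.
have h1 : alpha k = e i *: actX (rev u) (alpha i).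
  by rewrite -actXZ -comb_single // -hxe -hx actX_revK.
have [f hf] := root_int (root_act (rev u) (root_alpha i)).
have e2 : comb (ind k) = comb (fun l => e i * f l) by rewrite comb_ind h1 hf combZ.
have := comb_inj e2 k; rewrite /ind eqxx /= => h.
have := @intUnitRing.unitzPl (e i) (f k); rewrite mulrC -h => /(_ erefl) hu.
lia.
Qed.

Lemma pos_not_simple x i : is_root x -> nonneg x -> x <> alpha i ->
  exists e l, [/\ x = comb e, l != i & 0 < e l].
Proof.
move=> rx [e [he ex]] hxi.
have [/existsP [l /andP [hl hel]]|hno] := boolP [exists l, (l != i) && (e l != 0)].
  by exists e, l; split => //; rewrite lt_def hel he.
have hz : forall l, l != i -> e l = 0.
  move=> l hl; apply/eqP; apply: contraNT hno => hel; apply/existsP; exists l.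
  by rewrite hl hel.
case: (root_single rx ex hz) => h1.
  by exfalso; apply: hxi; rewrite ex (comb_single hz) h1 scale1r.
by have := he i; rewrite h1.
Qed.

Lemma rX_comb i e : rX i (comb e) =
  comb (fun k => e k - pairing (alphav i) (comb e) * ind i k).
Proof. by rewrite /Defs.rX comb_ind_scale combB. Qed.

Lemma rX_pos x i : is_root x -> nonneg x -> x <> alpha i -> nonneg (rX i x).
Proof.
move=> rx nx hxi; have [e [l [ex hl hel]]] := pos_not_simple rx nx hxi.
have r2 : is_root (rX i x) by apply: (root_act [:: i]).
case: (root_dichot r2) => // hn; exfalso.
apply: (coord_pos_nonpos (l := l) _ _ hn); first by rewrite ex rX_comb.
by rewrite /ind (negbTE hl) /= mulr0 subr0.
Qed.

Lemma alpha_not_nonpos i : ~ nonpos (alpha i).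
Proof. by move=> h; move: (alpha_neq0 i); rewrite (nonneg_nonpos (nonneg_alpha i) h) eqxx. Qed.

Lemma main_eq beta i w : actX (rev w) (alpha i) = alpha i ->
  actY (i :: w) (coroot beta) = actY w (coroot beta) + rY i (coroot beta) - coroot beta.
Proof.
move=> hw; rewrite /= /Defs.rY actY_adj hw.
by rewrite addrCA addrAC subrr add0r.
Qed.

Lemma main_q beta i w : pos_root beta -> actX (rev w) (alpha i) = alpha i ->
  quantum (rX i beta) -> quantum (actX w beta) -> quantum (actX (i :: w) beta).
Proof.
move=> hb hw [pe qe] [pg qg].
have [rb nb] := (pos_rootE beta).1 hb.
have [re ne] := (pos_rootE _).1 pe.
have [rg ng] := (pos_rootE _).1 pg.
set bv := coroot beta.
set c := pairing bv (alpha i).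
set g0 := actX w beta in rg ng qg pg.
have hw' : actX w (alpha i) = alpha i by rewrite -{1}hw actX_K.
have g0ne : g0 <> alpha i.
  move=> e; have eb : beta = alpha i by rewrite -(actX_revK w beta) -/g0 e hw.
  by apply: (@alpha_not_nonpos i); rewrite /nonpos -rX_alpha -eb.
have ene : rX i beta <> alpha i.
  move=> e; have eb : beta = - alpha i by rewrite -(rXK i beta) e rX_alpha.
  by apply: (@alpha_not_nonpos i); rewrite /nonpos -eb.
have hd : actX (i :: w) beta = rX i g0 by [].
rewrite hd.
set d := rX i g0.
have rd : is_root d by apply: (root_act [:: i]).
have nd : nonneg d by apply: rX_pos.
have hgv : coroot g0 = actY w bv by apply: coroot_act.
have hdv : coroot d = rY i (coroot g0) by apply: (coroot_act [:: i]).
have hev : coroot (rX i beta) = rY i bv by apply: (coroot_act [:: i]).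
have hda : pairing (coroot d) (alpha i) = - c.
  by rewrite hdv rY_adj rX_alpha pairingNr hgv actY_adj hw.
have hc1 : c < 0 -> c = -1.
  move=> hc.
  have hea : pairing (coroot (rX i beta)) (alpha i) = - c.
    by rewrite hev rY_adj rX_alpha pairingNr.
  suff : pairing (coroot (rX i beta)) (alpha i) = 1 by rewrite hea; lia.
  apply: qe; last by move=> e; apply: ene.
  split; first by apply/pos_rootE; split; [apply: root_alpha | apply: nonneg_alpha].
  apply/neg_rootE; split; first by apply: root_act; apply: root_alpha.
  have r2 : is_root (actX (refl_word (rX i beta)) (alpha i)) by apply: root_act; apply: root_alpha.
  case: (root_dichot r2) => // hn; exfalso.
  have [e [l [ex hl hel]]] := pos_not_simple re ne ene.
  apply: (coord_neg_nonneg (l := l) (e := fun k => ind i k - - c * e k) _ _ hn).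
    by rewrite refl_act // hea ex combZ -(comb_ind i) combB.
  rewrite /ind (negbTE hl) /= sub0r.
  nia.
split; first by apply/pos_rootE.
move=> g [pgg ngg] hgd.
have [rgg nggg] := (pos_rootE _).1 pgg.
have [rz nz] := (neg_rootE _).1 ngg.
move: rz nz; rewrite refl_act // => rz nz.
case: (eqVneq g (alpha i)) => [egi|hgi].
  subst g; rewrite hda.
  case: (ltP c 0) => hc; first by rewrite hc1.
  exfalso; move: (root_neq0 rz).
  rewrite (nonneg_nonpos _ nz) ?eqxx //.
  rewrite hda scaleNr opprK; apply: nonnegD; [exact: nonneg_alpha | exact: nonnegZ].
set q := pairing (coroot d) g in rz nz *.
case: (eqVneq (g - q *: d) (- alpha i)) => [ez|hz].
  have eg : g = q *: d - alpha i by rewrite -ez addrC subrK.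
  have hq : q = - c.
    have := erefl q; rewrite {2}/q eg pairingBr pairingZr coroot_pair // hda; lia.
  case: (ltP c 0) => hc; first by rewrite hq hc1.
  exfalso; move: (root_neq0 rgg).
  rewrite (nonneg_nonpos nggg) ?eqxx //.
  rewrite /nonpos eg opprB hq; apply: nonnegD; [exact: nonneg_alpha | ].
  rewrite scaleNr opprK; exact: nonnegZ.
set z := g - q *: d in rz nz hz.
have rnz : is_root (- z) by apply: root_N.
have nnz : nonneg (- z) by [].
have hnz : - z <> alpha i by move=> e; move/eqP: hz; apply; rewrite -e opprK.
have pz : nonpos (rX i z) by rewrite /nonpos -rXN; apply: rX_pos.
set g' := rX i g.
have rg' : is_root g' by apply: (root_act [:: i]).
have ng' : nonneg g' by apply: rX_pos => //; apply/eqP.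
have hqq : q = pairing (coroot g0) g' by rewrite /q hdv rY_adj.
have eid : actX (refl_word g0) g' = rX i z.
  rewrite refl_act // /z rXD rXN rXZ -hqq /d rXK.
  by [].
rewrite hqq; apply: qg.
  split; first by apply/pos_rootE.
  by apply/neg_rootE; rewrite eid; split => //; apply: (root_act [:: i]).
by move=> e; apply: hgd; rewrite /d -e /g' rXK.
Qed.

End Basic.

Unset Implicit Arguments.

Theorem lemma2p28 (n : nat) (I : finType) (A : I -> I -> int)
    (alpha alphav : I -> 'rV[int]_n)
    (hKM : KM_root_datum A alpha alphav)
    (beta : 'rV[int]_n) (i : I) (w : seq I) :
  pos_root alpha alphav beta ->
  actX alpha alphav (rev w) (alpha i) = alpha i ->
  quantum alpha alphav beta ->
  quantum alpha alphav (rX alpha alphav i beta) ->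
  quantum alpha alphav (actX alpha alphav w beta) ->
  quantum alpha alphav (actX alpha alphav (i :: w) beta) /\
  actY alpha alphav (i :: w) (coroot alpha alphav beta) =
    actY alpha alphav w (coroot alpha alphav beta)
    + rY alpha alphav i (coroot alpha alphav beta) - coroot alpha alphav beta.
Proof.
move=> hb hw _ qe qg; split.
- exact: (main_q hKM hb hw qe qg).
- by apply: main_eq.
Qed.
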